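(* In the kernel LSTD setting described in the context, let $\widehat\Delta=\widehat\theta-\theta^*$. Then $$(1-\bar\gamma)\|\widehat\Delta\|_\mu^2\le\rho^2(\widehat\Delta)=T_1+T_2+T_3-\lambda_n\|\widehat\Delta\|_{\mathbb{H}}^2,$$ where $T_1=\langle\widehat\Delta,\ \widehat\Sigma_{\rm cov}(r-\theta^* )+\widehat y_0+\widehat\Sigma_{\rm cr}\theta^*\rangle_{\mathbb{H}}$, $T_2=\lambda_n\langle\widehat\Delta,r-\theta^*\rangle_{\mathbb{H}}$, and $T_3=\langle\widehat\Delta,(\Gamma-\widehat\Gamma)\widehat\Delta\rangle_{\mathbb{H}}$ with $\widehat\Gamma=\widehat\Sigma_{\rm cov}-\widehat\Sigma_{\rm cr}$ and $\Gamma=\Sigma_{\rm cov}-\Sigma_{\rm cr}$.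
   Context: Markov reward process: state space $\mathcal{X}$, transition kernel $\mathcal{P}$ with stationary distribution $\mu$, known reward $r$, discount $\gamma\in[0,1)$; $\|f\|_\mu=(\int f^2d\mu)^{1/2}$. For $k\ge0$, $(\mathcal{T}^{(k)}f)(x)=\mathbb{E}[\sum_{\ell=0}^{k-1}\gamma^\ell r(X_\ell)+\gamma^kf(X_k)\mid X_0=x]$; for $K\ge1$ and $w\in\mathbb{R}^K$ in the probability simplex, $\mathcal{T}^{(w)}=\sum_kw_k\mathcal{T}^{(k)}$ and $\bar\gamma=\sum_kw_k\gamma^k$. $\mathbb{H}$ is an RKHS with kernel $\mathcal{K}$ containing constants and $r$, $\mathcal{R}_x=\mathcal{K}(\cdot,x)$, and $g\otimes h$ is $f\mapsto g\langle h,f\rangle_{\mathbb{H}}$. With $(X_0,\dots,X_K)$ a chain from $X_0\sim\mu$: $\Sigma_{\rm cov}=\mathbb{E}[\mathcal{R}_{X_0}\otimes\mathcal{R}_{X_0}]$, $\Sigma_{\rm cr}=\mathbb{E}[\mathcal{R}_{X_0}\otimes\sum_kw_k\gamma^k\mathcal{R}_{X_k}]$, $y_0=\mathbb{E}[\mathcal{R}_{X_0}\sum_kw_k\sum_{\ell=1}^{k-1}\gamma^\ell r(X_\ell)]$; $\theta^*\in\mathbb{H}$ solves $\Sigma_{\rm cov}\theta^*=\Sigma_{\rm cov}r+y_0+\Sigma_{\rm cr}\theta^*$. Given a trajectory $x_1,\dots,x_n$ ($n>K$, $\tilde n=n-K$): $\widehat\Sigma_{\rm cov}=\frac1{\tilde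 n}\sum_{t=1}^{\tilde n}\mathcal{R}_{x_t}\otimes\mathcal{R}_{x_t}$, $\widehat\Sigma_{\rm cr}=\frac1{\tilde n}\sum_{t=1}^{\tilde n}\mathcal{R}_{x_t}\otimes\sum_kw_k\gamma^k\mathcal{R}_{x_{t+k}}$, $\widehat y_0=\frac1{\tilde n}\sum_{t=1}^{\tilde n}\mathcal{R}_{x_t}\sum_kw_k\sum_{\ell=1}^{k-1}\gamma^\ell r(x_{t+\ell})$; for $\lambda_n>0$, $\widehat\theta$ solves $(\widehat\Sigma_{\rm cov}+\lambda_nI)\widehat\theta=(\widehat\Sigma_{\rm cov}+\lambda_nI)r+\widehat y_0+\widehat\Sigma_{\rm cr}\widehat\theta$. The functional $\rho$ is $\rho(f)=\big(\mathbb{E}[f^2(X_0)-\sum_{k=1}^Kw_k\gamma^kf(X_0)f(X_k)]\big)^{1/2}$ with $(X_0,\dots,X_K)$ a chain from $X_0\sim\mu$. *)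

(* Defs.v *)
From HB Require Import structures.
From mathcomp Require Import all_boot all_order all_algebra.
From mathcomp Require Import all_classical all_reals all_analysis.
Set Implicit Arguments. Unset Strict Implicit. Unset Printing Implicit Defensive.
Import Order.TTheory GRing.Theory Num.Theory.
Local Open Scope classical_set_scope.
Local Open Scope ring_scope.

Section KernelLSTD.
Context (R : realType) (d : measure_display) (X : measurableType d).
Context (H : lmodType R) (ip : H -> H -> R) (Rx : X -> H).

Definition ev (f : H) : X -> R := fun x => ip f (Rx x).

(* H (with inner product ip and kernel sections Rx) is an RKHS on X with
   kernel K(x,y) = ip (Rx x) (Rx y):  a real Hilbert space of functions
   on X (evaluation is injective, i.e. elements are identified with the
   functions ev f), with the reproducing property built into ev. *)
Definition is_rkhs : Prop :=
  [/\ (forall a f g h, ip (a *: f + g) h = a * ip f h + ip g h),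
      (forall f g, ip f g = ip g f),
      (forall f, 0 <= ip f f),
      (forall f, ip f f = 0 -> f = 0) &
      (forall f g, ev f =1 ev g -> f = g)] /\
      (forall u : nat -> H,
        (forall e : R, 0 < e -> exists N, forall m p, (N <= m)%N -> (N <= p)%N ->
            Num.sqrt (ip (u m - u p) (u m - u p)) < e) ->
        exists l : H, forall e : R, 0 < e -> exists N, forall m, (N <= m)%N ->
            Num.sqrt (ip (u m - l) (u m - l)) < e).

Definition tens (g h : H) : H -> H := fun f => ip h f *: g.

Variable P : R.-pker X ~> X.
Definition Pop (h : X -> R) : X -> R := fun x => (\int[P x]_y h y)%R.
Fixpoint Piter (k : nat) (h : X -> R) : X -> R :=
  if k is k'.+1 then Pop (Piter k' h) else h.

Variable mu : probability X R.

(* E[ f(X_0) g(X_k) ] for the chain started at X_0 ~ mu with kernel P *)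
Definition Epair (k : nat) (f g : X -> R) : R :=
  (\int[mu]_x (f x * Piter k g x))%R.

Definition muNorm2 (f : X -> R) : R := (\int[mu]_x (f x ^+ 2))%R.

Definition rho (K : nat) (w : nat -> R) (gamma : R) (f : X -> R) : R :=
  Num.sqrt (Epair 0 f f - \sum_(1 <= k < K.+1) w k * gamma ^+ k * Epair k f f).

End KernelLSTD.

Definition stationary (R : realType) (d : measure_display) (X : measurableType d)
  (P : R.-pker X ~> X) (mu : probability X R) : Prop :=
  forall A, measurable A -> (\int[mu]_x P x A = mu A)%E.

Definition in_simplex (R : realType) (K : nat) (w : nat -> R) : Prop :=
  (forall k, (1 <= k <= K)%N -> 0 <= w k) /\ \sum_(1 <= k < K.+1) w k = 1.

Definition gbar (R : realType) (K : nat) (w : nat -> R) (gamma : R) : R :=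
  \sum_(1 <= k < K.+1) w k * gamma ^+ k.

Section Empirical.
Context (R : realType) (X : Type) (H : lmodType R) (ip : H -> H -> R) (Rx : X -> H).
Context (K n : nat) (w : nat -> R) (gamma : R) (r : X -> R) (x : nat -> X).

Definition ntil : nat := (n - K)%N.

Definition Scov_hat (f : H) : H :=
  (ntil%:R)^-1 *: \sum_(1 <= t < ntil.+1) tens ip (Rx (x t)) (Rx (x t)) f.

Definition Scr_hat (f : H) : H :=
  (ntil%:R)^-1 *: \sum_(1 <= t < ntil.+1)
     tens ip (Rx (x t)) (\sum_(1 <= k < K.+1) (w k * gamma ^+ k) *: Rx (x (t + k)%N)) f.

Definition y_hat : H :=
  (ntil%:R)^-1 *: \sum_(1 <= t < ntil.+1)
     (\sum_(1 <= k < K.+1) w k * \sum_(1 <= l < k) gamma ^+ l * r (x (t + l)%N)) *: Rx (x t).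
End Empirical.

(* Main.v *)
Require Import Defs.
From HB Require Import structures.
From mathcomp Require Import all_boot all_order all_algebra.
From mathcomp Require Import all_classical all_reals all_analysis.
From mathcomp Require Import measurable_realfun.
From mathcomp Require Import ring lra.
Import Order.TTheory GRing.Theory Num.Theory.
Local Open Scope classical_set_scope.
Local Open Scope ring_scope.
Set Implicit Arguments. Unset Strict Implicit. Unset Printing Implicit Defensive.
Section Meas.
Context (R : realType) (d : measure_display) (X : measurableType d).

Definition BM (f : X -> R) := measurable_fun setT f /\ exists M : R, forall x, `|f x| <= M.

Lemma BM_int (m : {measure set X -> \bar R}) f : (m setT < +oo)%E -> BM f ->
  m.-integrable setT (EFin \o f).
Proof.
move=> mfin [mf [M hM]]; apply: measurable_bounded_integrable => //.
exists M; split; first exact: num_real.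
move=> y /ltW My x _; exact: le_trans (hM x) My.
Qed.

Lemma BM_cst c : BM (fun _ => c).
Proof. split; first exact: measurable_cst. by exists `|c|. Qed.

Lemma BMD f g : BM f -> BM g -> BM (fun x => f x + g x).
Proof.
move=> [mf [M hM]] [mg [N hN]]; split; first exact: measurable_realfun.measurable_funD.
exists (M + N) => x; exact: le_trans (ler_normD _ _) (lerD (hM x) (hN x)).
Qed.

Lemma BMM f g : BM f -> BM g -> BM (fun x => f x * g x).
Proof.
move=> [mf [M hM]] [mg [N hN]]; split; first exact: measurable_realfun.measurable_funM.
exists (M * N) => x; rewrite normrM; apply: ler_pM => //.
Qed.

Lemma BMX f : BM f -> BM (fun x => f x ^+ 2).
Proof. move=> bf; have := BMM bf bf; by under eq_fun do rewrite -expr2. Qed.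

End Meas.
Section PopS.
Context (R : realType) (d : measure_display) (X : measurableType d)
  (P : R.-pker X ~> X).

Lemma Px1 x : P x setT = 1%E.
Proof. exact: prob_kernel. Qed.

Lemma Pxfin x : (P x setT < +oo)%E.
Proof. by rewrite Px1 ltry. Qed.

Lemma Pop_cst x c : \int[P x]_y c = c.
Proof. by rewrite Rintegral_cst // Px1 /= mulr1. Qed.

Lemma BM_M (f : X -> R) : BM f -> exists M : R, 0 <= M /\ forall x, `|f x| <= M.
Proof.
move=> [_ [M hM]]; exists M; split => //.
exact: le_trans (normr_ge0 _) (hM point).
Qed.

Lemma Pop_BM h : BM h -> BM (Pop P h).
Proof.
move=> bh; have [M [M0 hM]] := BM_M bh.
have hint x := BM_int (Pxfin x) bh.
have cint x := BM_int (Pxfin x) (@BM_cst _ _ X M).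
split.
  have -> : Pop P h = (fun x => fine (\int[P x]_y ((h y + M)%R%:E))%E - M).
    apply/funext => x; rewrite /Pop.
    have E : \int[P x]_y (h y + M) = Pop P h x + M by rewrite RintegralD // Pop_cst.
    by rewrite /Rintegral in E; rewrite E addrK.
  apply: measurable_realfun.measurable_funB; last exact: measurable_cst.
  have mI : measurable_fun setT (fun x => (\int[P x]_y ((h y + M)%R%:E))%E : \bar R).
    apply: (measurable_fun_integral_kernel (l := P)).
    - move=> U mU; exact: measurable_kernel.
    - move=> z; rewrite lee_fin; have := hM z; rewrite ler_norml => /andP[+ _]; lra.
    - apply/measurable_EFinP; apply: measurable_realfun.measurable_funD; [exact: bh.1|exact: measurable_cst].
  exact: (measurableT_comp (fine_measurable measurableT) mI).
exists M => x; rewrite /Pop.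
apply: le_trans (le_normr_Rintegral measurableT (hint x)) _.
rewrite -[leRHS](Pop_cst x).
apply: le_Rintegral => //.
  have [mh _] := bh; apply: BM_int; first exact: Pxfin.
  split; first exact: measurableT_comp.
  by exists M => z; rewrite normr_id.
Qed.

Lemma Pop_mono h1 h2 x : BM h1 -> BM h2 -> (forall y, h1 y <= h2 y) -> Pop P h1 x <= Pop P h2 x.
Proof. move=> b1 b2 le12; apply: le_Rintegral => //; exact: BM_int (Pxfin x) _. Qed.

Lemma Pop_ge0 h x : (forall y, 0 <= h y) -> 0 <= Pop P h x.
Proof. by move=> h0; apply: Rintegral_ge0. Qed.

Lemma Pop_jensen h x : BM h -> Pop P h x ^+ 2 <= Pop P (fun y => h y ^+ 2) x.
Proof.
move=> bh; set c := Pop P h x.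
have int f := @BM_int _ _ _ (P x) f (Pxfin x).
have : \int[P x]_y (2 * c * h y) <= \int[P x]_y (c ^+ 2 + h y ^+ 2).
  apply: le_Rintegral => //.
  - by apply: int; apply: BMM (@BM_cst _ _ X _) bh.
  - by apply: int; apply: BMD (@BM_cst _ _ X _) (BMX bh).
  move=> y _; rewrite -subr_ge0.
  have -> : c ^+ 2 + h y ^+ 2 - 2 * c * h y = (c - h y) ^+ 2 by rewrite sqrrB; ring.
  exact: sqr_ge0.
rewrite RintegralZl //; last exact: int.
rewrite RintegralD //; [|exact: int (@BM_cst _ _ X _)|exact: int (BMX bh)].
rewrite Pop_cst.
have -> : \int[P x]_y h y = c by [].
rewrite /Pop; set q := \int[P x]_y (h y ^+ 2); move=> H.
have -> : c ^+ 2 = c * c by rewrite expr2.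
nra.
Qed.

End PopS.
Section Stat.
Context (R : realType) (d : measure_display) (X : measurableType d)
  (P : R.-pker X ~> X) (mu : probability X R).
Hypothesis stat : stationary P mu.

Definition muP : X -> pprobability X R := fun _ => mu.
Lemma mmuP : measurable_fun setT muP. Proof. exact: measurable_cst. Qed.
Definition lk : R.-sfker X ~> X := kprobability mmuP.
Definition kk : R.-sfker (X * X) ~> X := @kernel.kernel_snd _ _ _ X X X R P.

Lemma mufin : (mu setT < +oo)%E.
Proof. by rewrite probability_setT ltry. Qed.

Lemma stat_ge0 g : BM g -> (forall y, 0 <= g y) ->
  \int[mu]_x Pop P g x = \int[mu]_x g x.
Proof.
move=> bg g0.
rewrite /Rintegral; congr fine.
transitivity (\int[mu]_x (\int[P x]_y (g y)%:E))%E.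
  apply: eq_integral => x _; rewrite /Pop /Rintegral fineK //.
  exact: integrable_fin_num (BM_int (Pxfin P x) bg).
have -> : (\int[mu]_x (\int[P x]_y (g y)%:E))%E =
   (\int[lk point]_x (\int[kk (point, x)]_y (g y)%:E))%E by [].
rewrite -integral_kcomp //; last first.
  exact/measurable_EFinP/bg.1.
apply: eq_measure_integral => A mA _.
rewrite /kcomp /=; exact: stat.
Qed.

End Stat.
Section Iter.
Context (R : realType) (d : measure_display) (X : measurableType d)
  (P : R.-pker X ~> X) (mu : probability X R).
Hypothesis stat : stationary P mu.

Lemma Piter_BM k h : BM h -> BM (Piter P k h).
Proof. by move=> bh; elim: k => [//|k IH] /=; exact: Pop_BM. Qed.

Lemma Piter_ge0 k h : (forall y, 0 <= h y) -> forall x, 0 <= Piter P k h x.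
Proof. by move=> h0; elim: k => [//|k IH] x /=; exact: Pop_ge0. Qed.

Lemma stat_iter k g : BM g -> (forall y, 0 <= g y) ->
  \int[mu]_x Piter P k g x = \int[mu]_x g x.
Proof.
move=> bg g0; elim: k => [//|k IH] /=.
rewrite stat_ge0 //; [exact: Piter_BM|exact: Piter_ge0].
Qed.

Lemma Piter_jensen k f : BM f -> forall x,
  Piter P k f x ^+ 2 <= Piter P k (fun y => f y ^+ 2) x.
Proof.
move=> bf; elim: k => [//|k IH] x /=.
apply: le_trans (Pop_jensen _ _ (Piter_BM k bf)) _.
apply: Pop_mono => //; [exact: BMX (Piter_BM k bf)|exact: Piter_BM (BMX bf)].
Qed.

Lemma Epair_le k f : BM f -> Epair P mu k f f <= muNorm2 mu f.
Proof.
move=> bf; rewrite /Epair /muNorm2.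
set Q := Piter P k (fun y => f y ^+ 2).
have bQ : BM Q by exact: Piter_BM (BMX bf).
have int g := @BM_int _ _ _ mu g (mufin mu).
apply: (@le_trans _ _ (\int[mu]_x (2^-1 * (f x ^+ 2 + Q x)))).
  apply: le_Rintegral => //.
  - by apply: int; apply: BMM bf (Piter_BM k bf).
  - by apply: int; apply: BMM (@BM_cst _ _ X _) (BMD (BMX bf) bQ).
  move=> x _; have := Piter_jensen k bf x; rewrite -/Q.
  set p := Piter P k f x => hp.
  have := sqr_ge0 (f x - p); rewrite sqrrB => h2.
  rewrite !expr2 in hp h2 *; nra.
rewrite RintegralZl //; last exact: int (BMD (BMX bf) bQ).
rewrite RintegralD //; [|exact: int (BMX bf)|exact: int bQ].
rewrite /Q stat_iter //; last by move=> y; exact: sqr_ge0.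
  by set m := \int[mu]_x f x ^+ 2; rewrite le_eqVlt; apply/orP; left; apply/eqP; field.
exact: BMX.
Qed.

End Iter.
Section IP.
Context (R : realType) (H : lmodType R) (ip : H -> H -> R).
Hypothesis lin : forall a f g h, ip (a *: f + g) h = a * ip f h + ip g h.
Hypothesis sym : forall f g, ip f g = ip g f.

Lemma ip0l h : ip 0 h = 0.
Proof. have := lin 1 0 0 h; rewrite scaler0 addr0 mul1r; lra. Qed.

Lemma ipDl a b h : ip (a + b) h = ip a h + ip b h.
Proof. by have := lin 1 a b h; rewrite scale1r mul1r. Qed.

Lemma ipZl c a h : ip (c *: a) h = c * ip a h.
Proof. by have := lin c a 0 h; rewrite addr0 ip0l addr0. Qed.

Lemma ipNl a h : ip (- a) h = - ip a h.
Proof. by rewrite -scaleN1r ipZl mulN1r. Qed.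

Lemma ipBl a b h : ip (a - b) h = ip a h - ip b h.
Proof. by rewrite ipDl ipNl. Qed.

Lemma ipDr h a b : ip h (a + b) = ip h a + ip h b.
Proof. by rewrite sym ipDl !(sym h). Qed.

Lemma ipBr h a b : ip h (a - b) = ip h a - ip h b.
Proof. by rewrite sym ipBl !(sym h). Qed.

Lemma ipNr h a : ip h (- a) = - ip h a.
Proof. by rewrite sym ipNl (sym h). Qed.

Lemma ipZr h c a : ip h (c *: a) = c * ip h a.
Proof. by rewrite sym ipZl (sym h). Qed.

Lemma ip_bound (pos : forall f, 0 <= ip f f) a b :
  `|ip a b| <= (ip a a + ip b b) / 2.
Proof.
have p1 := pos (a - b); have p2 := pos (a + b).
rewrite !(ipDl, ipBl, ipDr, ipBr, ipNl, ipNr) (sym b a) in p1 p2.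
rewrite ler_norml; apply/andP; split; lra.
Qed.

Lemma alg (S C Scov Scr : H -> H) (y r th ts : H) (lam : R) :
  (forall a b, S (a - b) = S a - S b) ->
  (forall a b, C (a - b) = C a - C b) ->
  S th + lam *: th = (S r + lam *: r) + y + C th ->
  ip (th - ts) (Scov (th - ts)) - ip (th - ts) (Scr (th - ts)) =
  ip (th - ts) (S (r - ts) + y + C ts) + lam * ip (th - ts) (r - ts)
  + ip (th - ts) ((Scov (th - ts) - Scr (th - ts)) - (S (th - ts) - C (th - ts)))
  - lam * ip (th - ts) (th - ts).
Proof.
move=> SB CB E.
have := congr1 (ip (th - ts)) E.
rewrite !(ipDr, ipZr, SB, CB, ipNr).
set D := th - ts.
move=> E'. nra.
Qed.

End IP.
Section Hat.
Context (R : realType) (X : Type) (H : lmodType R) (ip : H -> H -> R) (Rx : X -> H).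
Hypothesis lin : forall a f g h, ip (a *: f + g) h = a * ip f h + ip g h.
Hypothesis sym : forall f g, ip f g = ip g f.
Context (K n : nat) (w : nat -> R) (gamma : R) (x : nat -> X).

Lemma Scov_hat_B a b : Scov_hat ip Rx K n x (a - b) =
  Scov_hat ip Rx K n x a - Scov_hat ip Rx K n x b.
Proof.
rewrite /Scov_hat -scalerBr -sumrB; congr (_ *: _); apply: eq_bigr => t _.
by rewrite /tens (ipBr lin sym) scalerBl.
Qed.

Lemma Scr_hat_B a b : Scr_hat ip Rx K n w gamma x (a - b) =
  Scr_hat ip Rx K n w gamma x a - Scr_hat ip Rx K n w gamma x b.
Proof.
rewrite /Scr_hat -scalerBr -sumrB; congr (_ *: _); apply: eq_bigr => t _.
by rewrite /tens (ipBr lin sym) scalerBl.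
Qed.
End Hat.
Theorem lemma1 (R : realType) (d : measure_display) (X : measurableType d)
  (P : R.-pker X ~> X) (mu : probability X R)
  (H : lmodType R) (ip : H -> H -> R) (Rx : X -> H)
  (r : X -> R) (rH : H) (gamma : R) (K n : nat) (w : nat -> R) (lam : R)
  (x : nat -> X)
  (Scov Scr : H -> H) (y0 theta_star theta_hat : H) :
  stationary P mu ->
  is_rkhs ip Rx ->
  (* bounded kernel, measurable elements *)
  (exists kappa : R, forall z, ip (Rx z) (Rx z) <= kappa) ->
  (forall f, measurable_fun setT (ev ip Rx f)) ->
  (* H contains the constants and r *)
  (exists c : H, forall z, ev ip Rx c z = 1) ->
  (forall z, ev ip Rx rH z = r z) ->
  0 <= gamma < 1 -> (1 <= K)%N -> in_simplex K w -> (K < n)%N -> 0 < lam ->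
  (* population operators, in weak (pairing) form:
     Sigma_cov = E[R_{X0} (x) R_{X0}],
     Sigma_cr  = E[R_{X0} (x) sum_k w_k gamma^k R_{Xk}],
     y0        = E[R_{X0} sum_k w_k sum_{l=1}^{k-1} gamma^l r(X_l)] *)
  (forall f g, ip g (Scov f) = Epair P mu 0 (ev ip Rx g) (ev ip Rx f)) ->
  (forall f g, ip g (Scr f) =
     \sum_(1 <= k < K.+1) w k * gamma ^+ k * Epair P mu k (ev ip Rx g) (ev ip Rx f)) ->
  (forall g, ip g y0 =
     \sum_(1 <= k < K.+1) w k * \sum_(1 <= l < k) gamma ^+ l * Epair P mu l (ev ip Rx g) r) ->
  Scov theta_star = Scov rH + y0 + Scr theta_star ->
  Scov_hat ip Rx K n x theta_hat + lam *: theta_hat =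
    (Scov_hat ip Rx K n x rH + lam *: rH) + y_hat Rx K n w gamma r x
      + Scr_hat ip Rx K n w gamma x theta_hat ->
  let Delta := theta_hat - theta_star in
  let T1 := ip Delta (Scov_hat ip Rx K n x (rH - theta_star)
                      + y_hat Rx K n w gamma r x
                      + Scr_hat ip Rx K n w gamma x theta_star) in
  let T2 := lam * ip Delta (rH - theta_star) in
  let Gamma := fun f => Scov f - Scr f in
  let Gamma_hat := fun f => Scov_hat ip Rx K n x f - Scr_hat ip Rx K n w gamma x f in
  let T3 := ip Delta (Gamma Delta - Gamma_hat Delta) in
  (1 - gbar K w gamma) * muNorm2 mu (ev ip Rx Delta)
     <= rho P mu K w gamma (ev ip Rx Delta) ^+ 2
  /\ rho P mu K w gamma (ev ip Rx Delta) ^+ 2 = T1 + T2 + T3 - lam * ip Delta Delta.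
Proof.
move=> stat [[lin sym pos _ _] _] [kappa hk] meas _ _ /andP[g0 g1] K1 [w0 w1] Kn lam0
  hcov hcr _ _ hemp Delta T1 T2 Gamma Gamma_hat T3.
set f := ev ip Rx Delta.
have bf : BM f.
  split; first exact: meas.
  exists ((ip Delta Delta + kappa) / 2) => z.
  rewrite /f /ev; apply: le_trans (ip_bound lin sym pos _ _) _.
  by have := hk z; lra.
have wg k : (1 <= k <= K)%N -> 0 <= w k * gamma ^+ k.
  by move=> hk1; apply: mulr_ge0; [exact: w0|exact: exprn_ge0].
have E0 : Epair P mu 0 f f = muNorm2 mu f.
  by apply: eq_Rintegral => y _; rewrite /= expr2.
have m0 : 0 <= muNorm2 mu f by apply: Rintegral_ge0 => y _; exact: sqr_ge0.
set A := Epair P mu 0 f f - \sum_(1 <= k < K.+1) w k * gamma ^+ k * Epair P mu k f f.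
have key : (1 - gbar K w gamma) * muNorm2 mu f <= A.
  rewrite /A E0 mulrBl mul1r lerD2l lerN2 /gbar mulr_suml.
  apply: ler_sum_nat => k hk1.
  apply: ler_wpM2l; first exact: wg.
  exact: Epair_le.
have gb1 : gbar K w gamma <= 1.
  rewrite -w1 /gbar; apply: ler_sum_nat => k hk1.
  apply: ler_piMr; first exact: w0.
  by apply: exprn_ile1 => //; exact: ltW.
have A0 : 0 <= A.
  apply: le_trans key; apply: mulr_ge0 => //; lra.
have rhoE : rho P mu K w gamma f ^+ 2 = A by rewrite /rho sqr_sqrtr.
split; first by rewrite rhoE.
have AE : A = ip Delta (Scov Delta) - ip Delta (Scr Delta).
  by rewrite /A hcov hcr.
rewrite rhoE AE /T1 /T2 /T3 /Gamma /Gamma_hat /Delta /=.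
apply: (alg lin sym) => //.
- move=> a b; exact: (@Scov_hat_B _ _ _ _ _ lin sym).
- move=> a b; exact: (@Scr_hat_B _ _ _ _ _ lin sym).
Qed.
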